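(* Let $G$ be a compactly generated locally compact group, $N$ a closed normal subgroup of $G$, and $\Gamma$ a connected graph of finite degree on which $G$ acts vertex-transitively by automorphisms. (1) If $\Gamma$ is a Cayley-Abels graph for $G$, then $\Gamma/N$ is a Cayley-Abels graph for $G/N$ (with the action induced from that of $G$ on $\Gamma/N$). (2) $\deg(\Gamma/N) \le \deg(\Gamma)$, with equality if and only if $N$ acts freely modulo kernel on $\Gamma$.
   Context: Graphs $\Gamma=(V,E,o,r)$: vertex set $V$, directed edge set $E$, initial-vertex map $o:E\to V$, involutive edge reversal $e\mapsto\bar e$; $\deg(v)=|o^{-1}(v)|$, $\deg(\Gamma)=\sup_v \deg(v)$. For a group $N$ acting on $\Gamma$, the quotient graph $\Gamma/N$ has as vertices the $N$-orbits on $V$ and as edges the $N$-orbits on $E$, with $o(Ne)=No(e)$, $\overline{Ne}=N\bar e$; if $N \trianglelefteq G$ the action of $G$ on $\Gamma/N$ factors through $G/N$. A Cayley-Abels graph for a locally compact group $G$ is a connected graph of finite degree on which $G$ acts vertex-transitively by automorphisms such that vertex stabilizers are open and connected-by-compact (i.e. a stabilizer $U$ satisfies that $U/G^\circ$ is compact; equivalently it is a Cayley-Abels graph for the totally disconnected group $G/G^\circ$ with compact open vertex stabilizers). A group $N$ acting on $\Gamma$ acts freely modulo kernel if for every vertex $v$, the stabilizer $N_{(v)}$ acts trivially on both the vertices and the edges of $\Gamma$. *)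

(* Defs.v *)
From Stdlib Require Import List Arith Classical.
Import ListNotations.

Record TopGroup := {
  carrier :> Type;
  gmul : carrier -> carrier -> carrier;
  ginv : carrier -> carrier;
  gone : carrier;
  gmulA : forall x y z, gmul x (gmul y z) = gmul (gmul x y) z;
  gmul1g : forall x, gmul gone x = x;
  gmulVg : forall x, gmul (ginv x) x = gone;
  gopen : (carrier -> Prop) -> Prop;
  gopen_all : gopen (fun _ => True);
  gopen_union : forall F : (carrier -> Prop) -> Prop,
      (forall U, F U -> gopen U) -> gopen (fun x => exists U, F U /\ U x);
  gopen_inter : forall U W, gopen U -> gopen W -> gopen (fun x => U x /\ W x);
  gmul_cont : forall U x y, gopen U -> U (gmul x y) ->
      exists A B, gopen A /\ gopen B /\ A x /\ B y /\
                  (forall a b, A a -> B b -> U (gmul a b));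
  ginv_cont : forall U, gopen U -> gopen (fun x => U (ginv x))
}.

Arguments gmul {t}.
Arguments ginv {t}.
Arguments gone {t}.
Arguments gopen {t}.

Definition closed_set {G : TopGroup} (C : G -> Prop) : Prop :=
  gopen (fun x => ~ C x).

Definition compact {G : TopGroup} (K : G -> Prop) : Prop :=
  forall F : (G -> Prop) -> Prop,
    (forall U, F U -> gopen U) ->
    (forall x, K x -> exists U, F U /\ U x) ->
    exists l : list (G -> Prop),
      (forall U, In U l -> F U) /\ (forall x, K x -> exists U, In U l /\ U x).

Definition hausdorff (G : TopGroup) : Prop :=
  forall x y : G, x <> y -> exists U W, gopen U /\ gopen W /\ U x /\ W y /\
     (forall z, U z -> W z -> False).

Definition locally_compact (G : TopGroup) : Prop :=
  hausdorff G /\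
  forall x : G, exists K U, compact K /\ gopen U /\ U x /\ (forall y, U y -> K y).

Inductive generated {G : TopGroup} (K : G -> Prop) : G -> Prop :=
| gen_one : generated K gone
| gen_in : forall x, K x -> generated K x
| gen_mul : forall x y, generated K x -> generated K y -> generated K (gmul x y)
| gen_inv : forall x, generated K x -> generated K (ginv x).

Definition compactly_generated (G : TopGroup) : Prop :=
  exists K : G -> Prop, compact K /\ forall g, generated K g.

Definition connected_set {G : TopGroup} (C : G -> Prop) : Prop :=
  ~ exists U W, gopen U /\ gopen W /\
      (forall x, C x -> U x \/ W x) /\
      (exists x, C x /\ U x) /\ (exists x, C x /\ W x) /\
      (forall x, C x -> U x -> W x -> False).

Definition id_component (G : TopGroup) : G -> Prop :=
  fun x => exists C : G -> Prop, connected_set C /\ C gone /\ C x.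

(* "U / H is compact" (image of U in G/H compact, quotient topology):
   the open sets of G/H are exactly the images of the open subsets of G that
   are saturated for right multiplication by H; so this says every cover of U
   by H-saturated open sets has a finite subcover. *)
Definition compact_mod {G : TopGroup} (H U : G -> Prop) : Prop :=
  forall F : (G -> Prop) -> Prop,
    (forall W, F W -> gopen W /\ (forall x h, W x -> H h -> W (gmul x h))) ->
    (forall x, U x -> exists W, F W /\ W x) ->
    exists l : list (G -> Prop),
      (forall W, In W l -> F W) /\ (forall x, U x -> exists W, In W l /\ W x).

Definition subgroup {G : TopGroup} (N : G -> Prop) : Prop :=
  N gone /\ (forall x y, N x -> N y -> N (gmul x y)) /\ (forall x, N x -> N (ginv x)).

Definition closed_normal_subgroup {G : TopGroup} (N : G -> Prop) : Prop :=
  subgroup N /\ (forall g n, N n -> N (gmul (ginv g) (gmul n g))) /\ closed_set N.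

(* pi : G -> Q realises the topological quotient group G/N:
   a continuous, open, surjective homomorphism with kernel N
   (this determines Q up to isomorphism of topological groups). *)
Definition is_quotient_map {G Q : TopGroup} (N : G -> Prop) (pi : G -> Q) : Prop :=
  (forall x y, pi (gmul x y) = gmul (pi x) (pi y)) /\
  (forall q, exists g, pi g = q) /\
  (forall g, pi g = gone <-> N g) /\
  (forall U, gopen U -> gopen (fun g => U (pi g))) /\
  (forall U, gopen U -> gopen (fun q => exists g, U g /\ pi g = q)).

(* Graphs (Serre convention)                                            *)

Record graph := {
  V : Type;
  E : Type;
  org : E -> V;
  rev : E -> E;
  revK : forall e, rev (rev e) = e
}.

Arguments org {g}.
Arguments rev {g}.

Definition term {Gm : graph} (e : E Gm) : V Gm := org (rev e).

Inductive reach (Gm : graph) (u : V Gm) : V Gm -> Prop :=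
| reach_refl : reach Gm u u
| reach_step : forall e, reach Gm u (org e) -> reach Gm u (term e).

Definition connected_graph (Gm : graph) : Prop :=
  inhabited (V Gm) /\ forall u v : V Gm, reach Gm u v.

Definition has_card {X : Type} (P : X -> Prop) (n : nat) : Prop :=
  exists l : list X, NoDup l /\ length l = n /\ forall x, In x l <-> P x.

Definition vdeg_is (Gm : graph) (v : V Gm) (n : nat) : Prop :=
  has_card (fun e : E Gm => org e = v) n.

Definition finite_degree (Gm : graph) : Prop :=
  exists d, forall v, exists k, k <= d /\ vdeg_is Gm v k.

Definition deg_is (Gm : graph) (d : nat) : Prop :=
  (forall v, exists k, k <= d /\ vdeg_is Gm v k) /\ (exists v, vdeg_is Gm v d).

Definition graph_action (G : TopGroup) (Gm : graph)
  (aV : G -> V Gm -> V Gm) (aE : G -> E Gm -> E Gm) : Prop :=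
  (forall v, aV gone v = v) /\ (forall e, aE gone e = e) /\
  (forall g h v, aV (gmul g h) v = aV g (aV h v)) /\
  (forall g h e, aE (gmul g h) e = aE g (aE h e)) /\
  (forall g e, org (aE g e) = aV g (org e)) /\
  (forall g e, rev (aE g e) = aE g (rev e)).

Definition vertex_transitive (G : TopGroup) (Gm : graph) (aV : G -> V Gm -> V Gm) : Prop :=
  forall u v, exists g, aV g u = v.

Definition stabilizer {G : TopGroup} {Gm : graph} (aV : G -> V Gm -> V Gm) (v : V Gm) : G -> Prop :=
  fun g => aV g v = v.

Definition cayley_abels (G : TopGroup) (Gm : graph)
  (aV : G -> V Gm -> V Gm) (aE : G -> E Gm -> E Gm) : Prop :=
  connected_graph Gm /\ finite_degree Gm /\ graph_action G Gm aV aE /\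
  vertex_transitive G Gm aV /\
  forall v, gopen (stabilizer aV v) /\ compact_mod (id_component G) (stabilizer aV v).

(* (D, pV, pE) realises the quotient graph Gm/N: vertices and edges of D are
   the N-orbits, with o(Ne) = N o(e) and rev(Ne) = N rev(e). *)
Definition is_quotient_graph (G : TopGroup) (N : G -> Prop) (Gm : graph)
  (aV : G -> V Gm -> V Gm) (aE : G -> E Gm -> E Gm)
  (D : graph) (pV : V Gm -> V D) (pE : E Gm -> E D) : Prop :=
  (forall w, exists v, pV v = w) /\ (forall f, exists e, pE e = f) /\
  (forall x y, pV x = pV y <-> exists n, N n /\ aV n x = y) /\
  (forall x y, pE x = pE y <-> exists n, N n /\ aE n x = y) /\
  (forall e, org (pE e) = pV (org e)) /\
  (forall e, rev (pE e) = pE (rev e)).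

Definition acts_freely_mod_kernel {G : TopGroup} (N : G -> Prop) (Gm : graph)
  (aV : G -> V Gm -> V Gm) (aE : G -> E Gm -> E Gm) : Prop :=
  forall v n, N n -> aV n v = v ->
    (forall w, aV n w = w) /\ (forall e, aE n e = e).

(* Main.v *)
Require Import Defs.
From Stdlib Require Import List Arith Classical Lia.
From Stdlib Require Import FunctionalExtensionality PropExtensionality.
Import ListNotations.

Definition img {X Y : Type} (f : X -> Y) (l : list X) : Y -> Prop :=
  fun y => exists x, In x l /\ f x = y.
Definition reps {X Y : Type} (f : X -> Y) (l r : list X) : Prop :=
  incl r l /\ NoDup (map f r) /\ forall x, In x l -> exists x', In x' r /\ f x = f x'.

Lemma reps_ex {X Y : Type} (f : X -> Y) (l : list X) : exists r, reps f l r.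
Proof.
  induction l as [|a l [r [Hi [Hn Hc]]]].
  - exists nil. split; [intros x H; inversion H|]. split; [constructor|].
    intros x H; inversion H.
  - destruct (classic (exists x', In x' r /\ f a = f x')) as [[x' [Hx' Hfx]]|Hno].
    + exists r. split; [intros x H; right; auto|]. split; [auto|].
      intros x [<-|H]; eauto.
    + exists (a::r). split. { intros x [<-|H]; [left; auto|right; auto]. }
      split. { simpl. constructor; auto. intros Hin. apply in_map_iff in Hin.
        destruct Hin as [x [Hfx Hx]]. apply Hno; eauto. }
      intros x [<-|H]. { exists a; split; [left|]; auto. }
      destruct (Hc x H) as [x' [? ?]]. exists x'; split; [right|]; auto.
Qed.

Lemma reps_card {X Y : Type} (f : X -> Y) l r :
  reps f l r -> has_card (img f l) (length r).
Proof.
  intros [Hi [Hn Hc]]. exists (map f r). split; auto. split; [apply length_map|].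
  intros y; split.
  - intros H; apply in_map_iff in H; destruct H as [x [<- Hx]]. exists x; split; auto.
  - intros [x [Hx <-]]. destruct (Hc x Hx) as [x' [Hx' ->]]. apply in_map; auto.
Qed.

Lemma nodup_map_inj {X Y : Type} (f : X -> Y) l x y :
  NoDup (map f l) -> In x l -> In y l -> f x = f y -> x = y.
Proof.
  induction l as [|a l IH]; simpl; intros Hn Hx Hy Hf. contradiction.
  inversion Hn as [|b m Hnin Hn' Hb]; subst.
  destruct Hx as [<-|Hx]; destruct Hy as [<-|Hy]; auto.
  - exfalso. apply Hnin. rewrite Hf. apply in_map; auto.
  - exfalso. apply Hnin. rewrite <- Hf. apply in_map; auto.
Qed.

Lemma nodup_map_equiv {X Y Z : Type} (f : X -> Y) (h : X -> Z) l :
  (forall x y, f x = f y <-> h x = h y) -> NoDup (map f l) -> NoDup (map h l).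
Proof.
  intros Heq. induction l as [|a l IH]; simpl; intros Hn. constructor.
  inversion Hn as [|b m Hnin Hn' Hb]; subst. constructor; auto.
  intro Hin; apply in_map_iff in Hin; destruct Hin as [x [Hhx Hx]].
  apply Hnin. apply (proj2 (Heq x a)) in Hhx. rewrite <- Hhx. apply in_map; auto.
Qed.

Lemma reps_equiv {X Y Z : Type} (f : X -> Y) (h : X -> Z) l r :
  (forall x y, f x = f y <-> h x = h y) -> reps f l r -> reps h l r.
Proof.
  intros Heq [Hi [Hn Hc]]. split; auto. split. eapply nodup_map_equiv; eauto.
  intros x Hx. destruct (Hc x Hx) as [x' [? ?]]. exists x'; split; auto.
  apply Heq; auto.
Qed.

Lemma reps_le {X Y : Type} (f : X -> Y) l r :
  NoDup l -> reps f l r -> length r <= length l.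
Proof.
  intros Hl [Hi [Hn Hc]]. apply NoDup_incl_length; auto. eapply NoDup_map_inv; eauto.
Qed.

Lemma reps_eq_iff {X Y : Type} (f : X -> Y) l r :
  NoDup l -> reps f l r ->
  (length r = length l <-> forall x y, In x l -> In y l -> f x = f y -> x = y).
Proof.
  intros Hl Hr. pose proof (reps_le f l r Hl Hr) as Hle.
  destruct Hr as [Hi [Hn Hc]]. split.
  - intros Hlen. assert (Hr' : NoDup r) by (eapply NoDup_map_inv; eauto).
    assert (Hinc : incl l r) by (apply NoDup_length_incl; auto; lia).
    intros x y Hx Hy Hf. eapply nodup_map_inj; eauto.
  - intros Hinj. assert (incl l r).
    { intros x Hx. destruct (Hc x Hx) as [x' [Hx' Hf]].
      rewrite (Hinj x x' Hx (Hi x' Hx') Hf). auto. }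
    assert (length l <= length r) by (apply NoDup_incl_length; auto). lia.
Qed.

Lemma has_card_ext {X : Type} (P P' : X -> Prop) n :
  (forall x, P x <-> P' x) -> has_card P n -> has_card P' n.
Proof.
  intros He [l [Hn [Hl Hi]]]. exists l. split; auto. split; auto.
  intro x. rewrite Hi. apply He.
Qed.

Lemma has_card_uniq {X : Type} (P : X -> Prop) n m :
  has_card P n -> has_card P m -> n = m.
Proof.
  intros [l1 [N1 [L1 I1]]] [l2 [N2 [L2 I2]]].
  assert (length l1 <= length l2).
  { apply NoDup_incl_length; auto. intros x Hx. apply I2, I1; auto. }
  assert (length l2 <= length l1).
  { apply NoDup_incl_length; auto. intros x Hx. apply I1, I2; auto. }
  lia.
Qed.

Lemma list_choice {A B : Type} (P : A -> B -> Prop) (l : list A) :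
  (forall a, In a l -> exists b, P a b) ->
  exists lb, (forall b, In b lb -> exists a, In a l /\ P a b) /\
             (forall a, In a l -> exists b, In b lb /\ P a b).
Proof.
  induction l as [|a l IH]; intros H.
  - exists nil. split; intros x Hx; inversion Hx.
  - destruct IH as [lb [H1 H2]]. { intros x Hx. apply H. right; auto. }
    destruct (H a (or_introl eq_refl)) as [b Hb].
    exists (b :: lb). split.
    + intros y [<-|Hy]. exists a; split; [left|]; auto.
      destruct (H1 y Hy) as [x [? ?]]. exists x; split; [right|]; auto.
    + intros x [<-|Hx]. exists b; split; [left|]; auto.
      destruct (H2 x Hx) as [y [? ?]]. exists y; split; [right|]; auto.
Qed.

Lemma mulgV (G : TopGroup) (x : G) : gmul x (ginv x) = gone.
Proof.
  assert (H1 : gmul (ginv x) (gmul x (ginv x)) = ginv x).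
  { rewrite gmulA, gmulVg, gmul1g. reflexivity. }
  transitivity (gmul (gmul (ginv (ginv x)) (ginv x)) (gmul x (ginv x))).
  { rewrite gmulVg, gmul1g. reflexivity. }
  rewrite <- gmulA, H1, gmulVg. reflexivity.
Qed.

Lemma mulg1 (G : TopGroup) (x : G) : gmul x gone = x.
Proof. rewrite <- (gmulVg G x), gmulA, mulgV, gmul1g. reflexivity. Qed.

Lemma invgK (G : TopGroup) (x : G) : ginv (ginv x) = x.
Proof.
  rewrite <- (mulg1 G (ginv (ginv x))), <- (gmulVg G x), gmulA, gmulVg, gmul1g.
  reflexivity.
Qed.

Theorem mainTheorem4 (G : TopGroup) (N : G -> Prop) (Gm : graph)
  (aV : G -> V Gm -> V Gm) (aE : G -> E Gm -> E Gm)
  (HGlc : locally_compact G) (HGcg : compactly_generated G)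
  (HN : closed_normal_subgroup N)
  (Hconn : connected_graph Gm) (Hfin : finite_degree Gm)
  (Hact : graph_action G Gm aV aE) (Htrans : vertex_transitive G Gm aV)
  (D : graph) (pV : V Gm -> V D) (pE : E Gm -> E D)
  (HD : is_quotient_graph G N Gm aV aE D pV pE) :
  (* (1) *)
  (cayley_abels G Gm aV aE ->
   forall (Q : TopGroup) (pi : G -> Q)
          (bV : Q -> V D -> V D) (bE : Q -> E D -> E D),
     is_quotient_map N pi ->
     (forall g v, bV (pi g) (pV v) = pV (aV g v)) ->
     (forall g e, bE (pi g) (pE e) = pE (aE g e)) ->
     cayley_abels Q D bV bE) /\
  (* (2) *)
  (exists d d', deg_is Gm d /\ deg_is D d' /\ d' <= d /\
     (d' = d <-> acts_freely_mod_kernel N Gm aV aE)).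
Proof.
  destruct Hact as [a1 [a2 [a3 [a4 [a5 a6]]]]].
  destruct HD as [sV [sE [kV [kE [oE rE]]]]].
  destruct HN as [[N1 [Nmul Ninv]] [Nconj Ncl]].
  destruct Hconn as [[v0] Hreach].
  destruct Hfin as [dd Hfin].
  assert (aEK : forall g e, aE (ginv g) (aE g e) = e).
  { intros g e. rewrite <- a4, gmulVg, a2. reflexivity. }
  assert (aEK' : forall g e, aE g (aE (ginv g) e) = e).
  { intros g e. rewrite <- a4, mulgV, a2. reflexivity. }
  assert (aVK : forall g v, aV (ginv g) (aV g v) = v).
  { intros g v. rewrite <- a3, gmulVg, a1. reflexivity. }
  assert (conj : forall g e1 e2, pE e1 = pE e2 -> pE (aE g e1) = pE (aE g e2)).
  { intros g e1 e2 H. apply kE in H. destruct H as [n [Nn Hn]].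
    apply kE. exists (gmul g (gmul n (ginv g))). split.
    - pose proof (Nconj (ginv g) n Nn) as Hc. rewrite invgK in Hc. exact Hc.
    - rewrite a4, a4, aEK, Hn. reflexivity. }
  assert (conjI : forall g e1 e2, pE e1 = pE e2 <-> pE (aE g e1) = pE (aE g e2)).
  { intros g e1 e2. split; [apply conj|]. intros H.
    apply (conj (ginv g)) in H. rewrite !aEK in H. exact H. }
  assert (Eset : forall v l, (forall e, In e l <-> org e = v) ->
                 forall w, org w = pV v <-> img pE l w).
  { intros v l Hl w. split.
    - intros Hw. destruct (sE w) as [e0 <-]. rewrite oE in Hw.
      apply kV in Hw. destruct Hw as [n [Nn Hn]].
      exists (aE n e0). split.
      + apply Hl. rewrite a5. exact Hn.
      + symmetry. apply kE. exists n; auto.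
    - intros [x [Hx <-]]. rewrite oE. f_equal. apply Hl; auto. }
  assert (edges : forall v, exists l : list (E Gm), NoDup l /\ forall e, In e l <-> org e = v).
  { intros v. destruct (Hfin v) as [k [_ [l [Hn [_ Hi]]]]]. exists l; auto. }
  destruct (edges v0) as [l0 [Hl0n Hl0]].
  destruct (reps_ex pE l0) as [r0 Hr0].
  set (d := length l0). set (d' := length r0).
  assert (edges_g : forall g e, In e (map (aE g) l0) <-> org e = aV g v0).
  { intros g e. rewrite in_map_iff. split.
    - intros [x [<- Hx]]. rewrite a5. f_equal. apply Hl0; auto.
    - intros He. exists (aE (ginv g) e). split; [apply aEK'|].
      apply Hl0. rewrite a5, He, aVK. reflexivity. }
  assert (GdegAll : forall v, vdeg_is Gm v d).
  { intros v. destruct (Htrans v0 v) as [g <-].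
    exists (map (aE g) l0). split.
    - assert (H := nodup_map_equiv (fun x => x) (aE g) l0).
      rewrite map_id in H. apply H; auto. intros x y; split; [intros ->; auto|].
      intros Hxy. rewrite <- (aEK g x), Hxy, aEK. reflexivity.
    - split. apply length_map. apply edges_g. }
  assert (DdegAll : forall w, vdeg_is D w d').
  { intros w. destruct (sV w) as [v <-]. destruct (Htrans v0 v) as [g <-].
    unfold vdeg_is.
    apply (has_card_ext (img (fun e => pE (aE g e)) l0)).
    - intros f. rewrite (Eset (aV g v0) (map (aE g) l0) (edges_g g) f).
      split.
      + intros [x [Hx <-]]. exists (aE g x). split; auto. apply in_map; auto.
      + intros [x [Hx <-]]. apply in_map_iff in Hx. destruct Hx as [y [<- Hy]].
        exists y; auto.
    - apply reps_card. eapply reps_equiv; [|exact Hr0]. apply conjI. }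
  split.
  -
    intros CA Q pi bV bE Hpi HbV HbE.
    destruct CA as [_ [_ [_ [_ Hst]]]].
    destruct Hpi as [pm [ps [pk [pc po]]]].
    assert (pi1 : pi gone = gone) by (apply pk; exact N1).
    assert (Qcomp : forall h, id_component G h -> id_component Q (pi h)).
    { intros h [C [HC [C1 Ch]]].
      exists (fun q => exists g, C g /\ pi g = q).
      split; [|split; [exists gone; split; auto|exists h; split; auto]].
      intros [U [W [HU [HW [Hcv [[x [[g [Cg <-]] Ux]] [[y [[g' [Cg' <-]] Wy]] Hdis]]]]]]].
      apply HC. exists (fun g => U (pi g)), (fun g => W (pi g)).
      split; [apply pc; auto|]. split; [apply pc; auto|].
      split. { intros z Cz; apply Hcv; exists z; auto. }
      split. { exists g; auto. }
      split. { exists g'; auto. }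
      intros z Cz Uz Wz. apply (Hdis (pi z)); auto. exists z; auto. }
    split.
    { split. constructor; exact (pV v0).
      intros u w. destruct (sV u) as [x <-]. destruct (sV w) as [y <-].
      induction (Hreach x y) as [|e He IH].
      - constructor.
      - unfold term. rewrite <- oE, <- rE. apply (reach_step D (pV x) (pE e)).
        rewrite oE. exact IH. }
    split.
    { exists d'. intros w. exists d'. split; auto. }
    split.
    { split. { intros w. destruct (sV w) as [v <-]. rewrite <- pi1, HbV, a1. reflexivity. }
      split. { intros f. destruct (sE f) as [e <-]. rewrite <- pi1, HbE, a2. reflexivity. }
      split. { intros q1 q2 w. destruct (ps q1) as [g1 <-]. destruct (ps q2) as [g2 <-].
               destruct (sV w) as [v <-]. rewrite <- pm, !HbV, a3. reflexivity. }
      split. { intros q1 q2 w. destruct (ps q1) as [g1 <-]. destruct (ps q2) as [g2 <-].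
               destruct (sE w) as [v <-]. rewrite <- pm, !HbE, a4. reflexivity. }
      split. { intros q f. destruct (ps q) as [g <-]. destruct (sE f) as [e <-].
               rewrite HbE, !oE, a5, HbV. reflexivity. }
      intros q f. destruct (ps q) as [g <-]. destruct (sE f) as [e <-].
      rewrite HbE, !rE, a6, HbE. reflexivity. }
    split.
    { intros w1 w2. destruct (sV w1) as [u <-]. destruct (sV w2) as [v <-].
      destruct (Htrans u v) as [g Hg]. exists (pi g). rewrite HbV, Hg. reflexivity. }
    intros w. destruct (sV w) as [v <-].
    assert (Hstab : stabilizer bV (pV v) = fun q => exists g, stabilizer aV v g /\ pi g = q).
    { apply functional_extensionality; intro q. apply propositional_extensionality. split.
      - intro Hq. destruct (ps q) as [g0 <-]. unfold stabilizer in Hq.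
        rewrite HbV in Hq. apply kV in Hq. destruct Hq as [n [Nn Hn]].
        exists (gmul n g0). split.
        + unfold stabilizer. rewrite a3; auto.
        + rewrite pm, (proj2 (pk n) Nn), gmul1g. reflexivity.
      - intros [g [Hg <-]]. unfold stabilizer in *. rewrite HbV, Hg. reflexivity. }
    rewrite Hstab. destruct (Hst v) as [Hop Hcm]. split.
    { apply po. exact Hop. }
    intros F HF Hcov.
    destruct (Hcm (fun W' : G -> Prop => exists W, F W /\ W' = (fun g => W (pi g))))
      as [l' [Hl'1 Hl'2]].
    + intros W' [W [HW ->]]. split. { apply pc, HF; auto. }
      intros x h Hx Hh. rewrite pm. apply (proj2 (HF W HW)); auto.
    + intros x Hx. destruct (Hcov (pi x)) as [W [HW HWx]]. { exists x; split; auto. }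
      exists (fun g => W (pi g)). split; [exists W; auto|]; auto.
    + destruct (list_choice (fun (a : G -> Prop) (b : Q -> Prop) => F b /\ a = (fun g => b (pi g))) l')
        as [lb [H1 H2]].
      { intros a Ha. destruct (Hl'1 a Ha) as [W [HW ->]]. exists W; auto. }
      exists lb. split.
      * intros b Hb. destruct (H1 b Hb) as [a [_ [Fb _]]]; auto.
      * intros q [g [Hg <-]]. destruct (Hl'2 g Hg) as [W' [HW' HW'g]].
        destruct (H2 W' HW') as [b [Hb [Fb ->]]]. exists b; split; auto.
  -
    exists d, d'. split; [split|split; [split|split]].
    + intros v. exists d. split; auto.
    + exists v0. apply GdegAll.
    + intros w. exists d'. split; auto.
    + exists (pV v0). apply DdegAll.
    + eapply reps_le; eauto.
    + unfold d, d'. rewrite (reps_eq_iff pE l0 r0 Hl0n Hr0). split.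
      * intros Hinj.
        assert (inj_all : forall u e1 e2, org e1 = u -> org e2 = u -> pE e1 = pE e2 -> e1 = e2).
        { intros u e1 e2 H1 H2 H. destruct (Htrans v0 u) as [g <-].
          assert (Hq : aE (ginv g) e1 = aE (ginv g) e2).
          { apply Hinj.
            - apply Hl0. rewrite a5, H1, aVK. reflexivity.
            - apply Hl0. rewrite a5, H2, aVK. reflexivity.
            - apply conj; auto. }
          rewrite <- (aEK' g e1), Hq, aEK'. reflexivity. }
        intros v n Nn Hfix.
        assert (fixE : forall u, aV n u = u -> forall e, org e = u -> aE n e = e).
        { intros u Hu e He. apply (inj_all u).
          - rewrite a5, He; auto.
          - auto.
          - symmetry. apply kE. exists n; auto. }
        assert (fixV : forall w, aV n w = w).
        { intros w. induction (Hreach v w) as [|e He IH]; auto.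
          unfold term. rewrite <- a5, <- a6, (fixE _ IH e eq_refl). reflexivity. }
        split; auto. intros e. apply (fixE (org e)); auto.
      * intros Hfree x y Hx Hy Hxy. apply kE in Hxy. destruct Hxy as [n [Nn Hn]].
        apply Hl0 in Hx. apply Hl0 in Hy.
        assert (aV n v0 = v0). { rewrite <- Hx, <- a5, Hn. congruence. }
        destruct (Hfree v0 n Nn H) as [_ He]. rewrite <- Hn, He. reflexivity.
Qed.
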